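(* An element $f\in C(X)_\mathcal{P}$ is almost clean (i.e. $f=r+e$ with $r$ a regular element, meaning a non-zero-divisor, and $e$ an idempotent of $C(X)_\mathcal{P}$) if and only if there exists a $\tau\mathcal{P}$-clopen subset $U$ of $X$ such that \[ int_{X_\mathcal{P}}(f^{-1}(\{1\}))\subseteq U\subseteq cl_{X_\mathcal{P}}(coz(f)). \]
   Context: Let $(X,\tau)$ be a $T_1$ topological space and $\mathcal{P}$ an ideal of closed subsets of $X$ (a nonempty family of closed sets closed under finite unions and under taking closed subsets). For $f\colon X\to\mathbb{R}$, $D_f$ denotes the set of points of discontinuity of $f$, and $C(X)_\mathcal{P}=\{f\colon X\to\mathbb{R} : \overline{D_f}\in\mathcal{P}\}$, a commutative ring with unity under pointwise operations. For $f\in C(X)_\mathcal{P}$, $Z_\mathcal{P}(f)=\{x: f(x)=0\}$ and $coz(f)=X\setminus Z_\mathcal{P}(f)$. $X_\mathcal{P}$ is $X$ with the topology having base $\{coz(f): f\in C(X)_\mathcal{P}\}$; $int_{X_\mathcal{P}}$ and $cl_{X_\mathcal{P}}$ are interior and closure in $X_\mathcal{P}$. A set $U\subseteq X$ is $\tau\mathcal{P}$-clopen if $U=Z_\mathcal{P}(f)=X\setminus Z_\mathcal{P}(g)$ for some $f,g\in C(X)_\mathcal{P}$. *)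

(* Defs.v *)
From HB Require Import structures.
From mathcomp Require Import all_boot all_order all_algebra.
From mathcomp Require Import all_classical all_reals all_analysis.
From mathcomp Require Import Rstruct Rstruct_topology.
From Stdlib Require Import Reals.

Set Implicit Arguments.
Unset Strict Implicit.
Unset Printing Implicit Defensive.
Import Order.TTheory GRing.Theory Num.Theory.
Local Open Scope classical_set_scope.
Local Open Scope ring_scope.

Section Defs.
Variable X : topologicalType.

Definition closed_ideal (P : set (set X)) : Prop :=
  [/\ P !=set0,
      (forall A, P A -> closed A),
      (forall A B, P A -> P B -> P (A `|` B)) &
      (forall A B, P A -> closed B -> B `<=` A -> P B)].

Definition discont (f : X -> R) : set X :=
  [set x | ~ {for x, continuous f}].

Definition CP (P : set (set X)) (f : X -> R) : Prop :=
  P (closure (discont f)).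

Definition ZP (f : X -> R) : set X := [set x | f x = 0].
Definition coz (f : X -> R) : set X := [set x | f x <> 0].

(* interior and closure in X_P, the topology on X with base
   { coz f : f in C(X)_P }, written out through the base *)
Definition intXP (P : set (set X)) (A : set X) : set X :=
  [set x | exists f, [/\ CP P f, coz f x & coz f `<=` A]].

Definition clXP (P : set (set X)) (A : set X) : set X :=
  [set x | forall f, CP P f -> coz f x -> coz f `&` A !=set0].

Definition tauP_clopen (P : set (set X)) (U : set X) : Prop :=
  exists f g, [/\ CP P f, CP P g, U = ZP f & U = ~` ZP g].

Definition regularP (P : set (set X)) (r : X -> R) : Prop :=
  CP P r /\
  forall g, CP P g -> (fun x => r x * g x) = (fun _ => 0) -> g = (fun _ => 0).

Definition idempotentP (P : set (set X)) (e : X -> R) : Prop :=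
  CP P e /\ (fun x => e x * e x) = e.

Definition almost_cleanP (P : set (set X)) (f : X -> R) : Prop :=
  exists r e, [/\ regularP P r, idempotentP P e & f = (fun x => r x + e x)].

End Defs.

(* Main.v *)
Require Import Defs.
From HB Require Import structures.
From mathcomp Require Import all_boot all_order all_algebra.
From mathcomp Require Import all_classical all_reals all_analysis.
From mathcomp Require Import Rstruct Rstruct_topology.
From Stdlib Require Import Reals.
From mathcomp Require Import lra.
Local Open Scope classical_set_scope.
Local Open Scope ring_scope.
Set Implicit Arguments.
Import Order.TTheory GRing.Theory Num.Theory.

Section Helpers.
Variable X : topologicalType.
Variable P : set (set X).
Hypothesis hP : closed_ideal P.

Lemma CP_sub2 (f g h : X -> R) : CP P f -> CP P g ->
  discont h `<=` discont f `|` discont g -> CP P h.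
Proof.
case: hP => _ _ hU hD Pf Pg sub.
rewrite /CP; apply: (hD _ _ (hU _ _ Pf Pg)); first exact: closed_closure.
by rewrite -closureU; apply: closureS.
Qed.

Lemma CP_cst (c : R) : CP P (fun _ => c).
Proof.
case: hP => [[A PA]] _ _ hD.
rewrite /CP; apply: (hD A); [by []|exact: closed_closure|].
have sub : discont (fun _ : X => c) `<=` set0.
  move=> y; rewrite /discont /= => H; apply: H; exact: cvg_cst.
by move=> x /(closureS sub); rewrite closure0.
Qed.

Lemma CP_add (f g : X -> R) : CP P f -> CP P g -> CP P (fun x => f x + g x).
Proof.
move=> Pf Pg; apply: (@CP_sub2 _ _ _ Pf Pg) => x; rewrite /discont /=.
move=> H; apply: contrapT => H2; apply: H.
have [cf cg] : {for x, continuous f} /\ {for x, continuous g}.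
  by split; apply: contrapT => K; apply: H2; [left|right].
exact: (@cvgD _ R^o _ (nbhs x) _ f g (f x) (g x) cf cg).
Qed.

Lemma CP_mul (f g : X -> R) : CP P f -> CP P g -> CP P (fun x => f x * g x).
Proof.
move=> Pf Pg; apply: (@CP_sub2 _ _ _ Pf Pg) => x; rewrite /discont /=.
move=> H; apply: contrapT => H2; apply: H.
have [cf cg] : {for x, continuous f} /\ {for x, continuous g}.
  by split; apply: contrapT => K; apply: H2; [left|right].
exact: (@cvgM _ _ (nbhs x) _ f g (f x) (g x) cf cg).
Qed.

Lemma CP_opp (f : X -> R) : CP P f -> CP P (fun x => - f x).
Proof.
move=> Pf; apply: (@CP_sub2 _ _ _ Pf Pf) => x; rewrite /discont /=.
move=> H; left => cf; apply: H; exact: (@cvgN _ R^o _ (nbhs x) _ f (f x) cf).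
Qed.

Definition chi (U : set X) (x : X) : R := if `[< U x >] then 1 else 0.

Lemma chi01 U x : chi U x = 0 \/ chi U x = 1.
Proof. by rewrite /chi; case: ifP; [right|left]. Qed.

Lemma chiT U x : U x -> chi U x = 1.
Proof. by move=> Ux; rewrite /chi; case: asboolP. Qed.

Lemma chiF U x : ~ U x -> chi U x = 0.
Proof. by move=> Ux; rewrite /chi; case: asboolP. Qed.

Lemma CP_chi U : tauP_clopen P U -> CP P (chi U).
Proof.
move=> [a [b [Pa Pb Ua Ub]]].
apply: (@CP_sub2 _ _ _ Pa Pb) => x; rewrite /discont /=.
move=> H; apply: contrapT => H2; apply: H.
have [ca cb] : {for x, continuous a} /\ {for x, continuous b}.
  by split; apply: contrapT => K; apply: H2; [left|right].
have [Ux|Ux] := pselect (U x).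
- apply: (near_cst_continuous (1:R)).
  have bx : b x != 0.
    by apply/eqP; move: Ux; rewrite {1}Ub /ZP /=.
  have Hn := @cvgr_neq0 _ R^o _ (nbhs x) _ b (b x) cb bx; near=> y; apply: chiT; rewrite Ub /ZP /=; apply/eqP; near: y; exact: Hn.
- apply: (near_cst_continuous (0:R)).
  have ax : a x != 0.
    by apply/eqP => a0; apply: Ux; rewrite Ua.
  have Hn := @cvgr_neq0 _ R^o _ (nbhs x) _ a (a x) ca ax; near=> y; apply: chiF; rewrite Ua /ZP /=; apply/eqP; near: y; exact: Hn.
Unshelve. all: by end_near.
Qed.

End Helpers.
Arguments CP_mul {X P} hP {f g}.
Arguments CP_add {X P} hP {f g}.
Arguments CP_opp {X P} hP {f}.
Arguments chi {X}.
Arguments chiT {X U x}.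
Arguments chiF {X U x}.
Arguments chi01 {X}.

Lemma idem01 (e : R) : e * e = e -> e = 0 \/ e = 1.
Proof.
move=> h; have : e * (e - 1) = 0 by rewrite mulrBr mulr1 h subrr.
by move/eqP; rewrite mulf_eq0 subr_eq0 => /orP[/eqP|/eqP]; [left|right].
Qed.

Theorem theorem3p11 (X : topologicalType) (hT1 : accessible_space X)
  (P : set (set X)) (hP : closed_ideal P) (f : X -> R) (hf : CP P f) :
  almost_cleanP P f <->
  exists U : set X, [/\ tauP_clopen P U,
    intXP P (f @^-1` [set 1]) `<=` U &
    U `<=` clXP P (coz f)].
Proof.
split.
- move=> [r [e [[Pr hreg] [Pe e2] fre]]].
  have e01 y : e y = 0 \/ e y = 1 by apply: idem01; exact: (congr1 (@^~ y) e2).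
  exists (ZP e); split.
  + exists e, (fun x => 1 - e x); split => //.
      by apply: (CP_add hP); [exact: CP_cst|exact: CP_opp].
    apply: funext => y; apply: propext; rewrite /ZP /=.
    case: (e01 y) => ->; split => //.
    - by move=> _; rewrite subr0 => /eqP; rewrite oner_eq0.
    - by move/eqP; rewrite oner_eq0.
    - by rewrite subrr.
  + move=> x [h [Ph hx hsub]]; rewrite /ZP /=.
    case: (e01 x) => // ex1; exfalso.
    have g0 := hreg (fun y => h y * e y) (CP_mul hP Ph Pe).
    have : (fun y => h y * e y) = (fun _ => 0).
      apply: g0; apply: funext => y.
      have [hy0|hy0] := pselect (h y = 0); first by rewrite hy0 ?mul0r ?mulr0.
      have fy : f y = 1 by apply: hsub.
      have := congr1 (@^~ y) fre; rewrite fy /= => fy'.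
      by case: (e01 y) => ey; rewrite ey in fy' *; [rewrite mulr0 mulr0|(have -> : r y = 0 by lra); rewrite mul0r].
    move/(congr1 (@^~ x)) => /=; rewrite ex1 mulr1 => hx0; exact: hx hx0.
  + move=> x ex h Ph hx; apply: contrapT => H.
    have hz y : h y <> 0 -> f y = 0.
      move=> hy; apply: contrapT => fy; apply: H; exists y; split => //.
    have g0 := hreg (fun y => h y * (1 - e y))
      (CP_mul hP Ph (CP_add hP (CP_cst hP 1) (CP_opp hP Pe))).
    have : (fun y => h y * (1 - e y)) = (fun _ => 0).
      apply: g0; apply: funext => y.
      have [hy0|hy0] := pselect (h y = 0); first by rewrite hy0 ?mul0r ?mulr0.
      have fy := hz y hy0.
      have := congr1 (@^~ y) fre; rewrite fy /= => fy'.
      case: (e01 y) => ey; rewrite ey in fy'.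
        by (have -> : r y = 0 by lra); rewrite mul0r.
      by rewrite ey subrr !mulr0.
    move/(congr1 (@^~ x)) => /=; rewrite /ZP /= in ex; rewrite ex subr0 mulr1.
    exact: hx.
- move=> [U [cU hint hcl]].
  have Pc := CP_chi hP cU.
  pose e : X -> R := fun x => 1 - chi U x.
  have Pe : CP P e by apply: (CP_add hP); [exact: CP_cst|exact: CP_opp].
  exists (fun x => f x - e x), e; split.
  + split; first by apply: (CP_add hP hf); exact: CP_opp.
    move=> g Pg rg; apply: funext => x; apply: contrapT => gx.
    have rgy y : (f y - e y) * g y = 0 := congr1 (@^~ y) rg.
    have [Ux|Ux] := pselect (U x).
    * have Ph := CP_mul hP Pg Pc.
      have [y [hy fy]] := hcl x Ux _ Ph (ltac:(by rewrite /coz /= chiT // mulr1)).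
      move: hy; rewrite /coz /= => hy.
      have cy : chi U y = 1.
        by case: (chi01 U y) => c //; exfalso; apply: hy; rewrite c mulr0.
      have gy : g y <> 0 by move=> K; apply: hy; rewrite K mul0r.
      have := rgy y; rewrite /e cy subrr subr0 => /eqP; rewrite mulf_eq0.
      by move=> /orP[/eqP K|/eqP K]; [exact: fy K|exact: gy K].
    * apply: (Ux); apply: hint.
      exists (fun y => g y * e y); split.
      - exact: (CP_mul hP Pg Pe).
      - by rewrite /coz /= /e chiF // subr0 mulr1.
      - move=> y; rewrite /coz /= => hy.
        have gy : g y <> 0 by move=> K; apply: hy; rewrite K mul0r.
        have cy : chi U y = 0.
          by case: (chi01 U y) => c //; exfalso; apply: hy; rewrite /e c subrr mulr0.
        have := rgy y => /eqP; rewrite mulf_eq0 => /orP[/eqP fe|/eqP K]; last by exfalso.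
        move: fe; rewrite /e cy subr0 => fe.
        change (f y = 1); lra.
  + split => //.
    apply: boolp.funext => x; rewrite /e; by case: (chi01 U x) => ->; rewrite ?subr0 ?subrr ?mulr1 ?mulr0.
  + apply: esym; apply: boolp.funext => x /=; by rewrite subrK.
Qed.
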